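(* Let $\rho=(V,B_1,B_2,B_3,I,J)$ be a framed representation, and let $\alpha=(V,B_1,B_2,I,J)$ be its underlying ADHM representation. Then $\rho$ is cyclic if and only if $\alpha$ is cyclic (stable). Here: - $\rho$ is cyclic if there is no proper nonzero subspace $V'\subset V$ preserved by $B_1,B_2,B_3$ and containing $\mathrm{Im}\,I$; - $\alpha$ is cyclic if there is no proper nonzero subspace $V'\subset V$ preserved by $B_1,B_2$ and containing $\mathrm{Im}\,I$.
   Context: A framed representation consists of: - a finite-dimensional complex vector space $V$; - the fixed space $V_\infty=\mathbb{C}^r$ with basis $e_1,\dots,e_r$, and the fixed map $A_r\in\mathrm{End}(V_\infty)$ with $A_re_a=e_{a+1}$, $e_{r+1}=0$; - linear maps $B_1,B_2,B_3\in\mathrm{End}(V)$, $I:V_\infty\to V$, $J:V\to V_\infty$. These satisfy $$[B_1,B_2]+IJ=0,\quad JB_3-A_rJ=0,\quad B_3I-IA_r=0,\quad [B_3,B_1]=0,\quad [B_3,B_2]=0.$$ *)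

(* Defs.v *)
From HB Require Import structures.
From mathcomp Require Import all_boot all_order all_algebra.
From mathcomp Require Import complex.
From mathcomp Require Import reals.
Set Implicit Arguments. Unset Strict Implicit. Unset Printing Implicit Defensive.
Import Order.TTheory GRing.Theory Num.Theory.
Local Open Scope ring_scope.

(* The fixed framing space V_infty = C^r, realised as row vectors 'rV[F]_r,
   with standard basis e_a = delta_mx 0 a. *)

(* shift matrix acting on row vectors by right multiplication:
   e_i *m shift_mx = e_(i+1), and e_(r-1) *m shift_mx = 0. *)
Definition shift_mx (F : fieldType) (r : nat) : 'M[F]_r :=
  \matrix_(i < r, j < r) ((nat_of_ord j == (nat_of_ord i).+1)%:R).

Definition A_r (F : fieldType) (r : nat) : 'End('rV[F]_r) :=
  linfun (fun v : 'rV[F]_r => v *m shift_mx F r).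

Definition framed_rep (F : fieldType) (V : vectType F) (r : nat)
    (B1 B2 B3 : 'End(V)) (I : 'Hom('rV[F]_r, V)) (J : 'Hom(V, 'rV[F]_r)) : Prop :=
  [/\ ((B1 \o B2)%VF - (B2 \o B1)%VF + (I \o J)%VF) = 0,
      ((J \o B3)%VF - (A_r F r \o J)%VF) = 0,
      ((B3 \o I)%VF - (I \o A_r F r)%VF) = 0,
      ((B3 \o B1)%VF - (B1 \o B3)%VF) = 0
    & ((B3 \o B2)%VF - (B2 \o B3)%VF) = 0].

Definition preserves (F : fieldType) (V : vectType F) (f : 'End(V)) (U : {vspace V}) : Prop :=
  (f @: U <= U)%VS.

Definition framed_cyclic (F : fieldType) (V : vectType F) (r : nat)
    (B1 B2 B3 : 'End(V)) (I : 'Hom('rV[F]_r, V)) : Prop :=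
  ~ exists U : {vspace V},
      [/\ U != 0%VS, U != fullv,
          [/\ preserves B1 U, preserves B2 U & preserves B3 U]
        & (limg I <= U)%VS].

Definition adhm_cyclic (F : fieldType) (V : vectType F) (r : nat)
    (B1 B2 : 'End(V)) (I : 'Hom('rV[F]_r, V)) : Prop :=
  ~ exists U : {vspace V},
      [/\ U != 0%VS, U != fullv, preserves B1 U, preserves B2 U
        & (limg I <= U)%VS].

(* Main.v *)
Require Import Defs.
From HB Require Import structures.
From mathcomp Require Import all_boot all_order all_algebra.
From mathcomp Require Import complex.
From mathcomp Require Import reals.
Import Order.TTheory GRing.Theory Num.Theory.
Local Open Scope ring_scope.

Section Aux.
Variables (K : fieldType) (V : vectType K).

Lemma presP (f : 'End(V)) (X : {vspace V}) :
  (forall x, x \in X -> f x \in X) -> preserves f X.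
Proof. by move=> H; apply/subvP => y /memv_imgP [x Hx ->]; apply: H. Qed.

Lemma presE (f : 'End(V)) (X : {vspace V}) x :
  preserves f X -> x \in X -> f x \in X.
Proof. by move=> H Hx; apply: (subvP H); apply: memv_img. Qed.

Lemma commE (f g : 'End(V)) x : (f \o g)%VF - (g \o f)%VF = 0 -> f (g x) = g (f x).
Proof.
move/eqP; rewrite subr_eq0 => /eqP H.
by have := congr1 (fun h : 'End(V) => h x) H; rewrite !comp_lfunE.
Qed.

Variables (B1 B2 B3 : 'End(V)) (U L : {vspace V}).
Hypotheses (h1 : (B3 \o B1)%VF - (B1 \o B3)%VF = 0)
           (h2 : (B3 \o B2)%VF - (B2 \o B3)%VF = 0)
           (hL : preserves B3 L) (hU1 : preserves B1 U) (hU2 : preserves B2 U)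
           (hLU : (L <= U)%VS).

Fixpoint W n : {vspace V} :=
  if n is n'.+1 then (W n' :&: B3 @^-1: W n')%VS else U.

Lemma W_sub n : (W n.+1 <= W n)%VS.
Proof. exact: capvSl. Qed.

Lemma W_U n : (W n <= U)%VS.
Proof. by elim: n => [|n IH] //=; apply: subv_trans IH; exact: capvSl. Qed.

Lemma W_L n : (L <= W n)%VS.
Proof.
elim: n => [|n IH] //=; apply/subvP => x Hx; rewrite memv_cap (subvP IH) //=.
by rewrite -memv_preim (subvP IH) // presE.
Qed.

Lemma W_pres (B : 'End(V)) : (B3 \o B)%VF - (B \o B3)%VF = 0 -> preserves B U ->
  forall n, preserves B (W n).
Proof.
move=> hc hB; elim=> [|n IH] //=; apply: presP => x; rewrite !memv_cap.
rewrite -!memv_preim => /andP [Hx H3x].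
by rewrite (presE _ _ _ IH Hx) /= (commE _ _ _ hc) (presE _ _ _ IH H3x).
Qed.

Lemma W_pres3 n : W n.+1 = W n -> preserves B3 (W n).
Proof.
move=> E; apply: presP => x Hx; rewrite memv_preim.
by move: Hx; rewrite -{1}E /= memv_cap => /andP [].
Qed.

Lemma W_stab : exists n, W n.+1 = W n.
Proof.
have H : forall n, (forall k, (k < n)%N -> W k.+1 != W k) -> (\dim (W n) + n <= \dim U)%N.
  elim=> [|n IH] Hk; first by rewrite addn0.
  have IH' := IH (fun k hk => Hk k (ltnW hk)).
  have := Hk n (ltnSn n); rewrite eqEdim W_sub /= -ltnNge => lt.
  by rewrite addnS; apply: leq_trans IH'; rewrite ltn_add2r.
case: (boolP [exists k : 'I_(\dim U).+1, W k.+1 == W k]).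
  by move/existsP => [k /eqP Hk]; exists k.
move/existsPn => Hn; exfalso.
have := H (\dim U).+1 (fun k hk => Hn (Ordinal hk)).
by rewrite addnS ltnNge leq_addl.
Qed.

End Aux.

Lemma eig_exists (K : closedFieldType) (V : vectType K) (f : 'End(V)) :
  (0 < \dim (fullv : {vspace V}))%N -> exists a, lker (f - a *: \1%VF) != 0%VS.
Proof.
move=> hd.
set M := passmx.mxof (vbasis fullv) (vbasis fullv) f.
have [a Ha] : exists a, root (char_poly M) a.
  by apply/closed_rootP; rewrite size_char_poly eqSS -lt0n.
exists a.
have := passmx.leigenspaceE (vbasisP fullv) f a; rewrite /passmx.leigenspace => ->.
rewrite passmx.vsof_eq0; last exact: vbasisP.
by have := eigenvalue_root_char M a; rewrite Ha.
Qed.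



Theorem lemma3p2 (R : realType) (V : vectType R[i]) (r : nat)
    (B1 B2 B3 : 'End(V)) (I : 'Hom('rV[R[i]]_r, V)) (J : 'Hom(V, 'rV[R[i]]_r)) :
  framed_rep B1 B2 B3 I J ->
  (framed_cyclic B1 B2 B3 I <-> adhm_cyclic B1 B2 I).
Proof.
case=> _ _ h3I h31 h32; split; last first.
  move=> Hc [U [U0 Uf [p1 p2 p3] hI]]; apply: Hc; by exists U.
move=> Hc [U [U0 Uf p1 p2 hI]]; apply: Hc.
have UfE : forall X : {vspace V}, (X <= U)%VS -> X != fullv.
  move=> X XU; apply: contraNneq Uf => XF; rewrite eqEsubv subvf /=.
  by rewrite -XF.
have hL : preserves B3 (limg I).
  rewrite /preserves -limg_comp.
  move/eqP: h3I; rewrite subr_eq0 => /eqP ->.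
  by rewrite limg_comp limgS // subvf.
case: (eqVneq (limg I) 0%VS) => hI0; last first.
  have [n Hn] := W_stab _ _ B3 U.
  have WL := W_L _ _ B3 U _ hL hI n.
  exists (W _ _ B3 U n); split.
  - by apply: contraNneq hI0 => W0; rewrite -subv0 -W0.
  - by apply: UfE; apply: W_U.
  - split; [exact: W_pres | exact: W_pres | exact: W_pres3].
  - exact: WL.
have hd : (0 < \dim (fullv : {vspace V}))%N.
  by apply: leq_trans (dimvS (subvf U)); rewrite lt0n dimv_eq0.
have [a Ha] := eig_exists _ _ B3 hd.
set E := lker (B3 - a *: \1%VF).
have EP : forall x, (x \in E) = (B3 x == a *: x).
  by move=> y; rewrite memv_ker add_lfunE opp_lfunE scale_lfunE id_lfunE subr_eq0.
have pE : forall B : 'End(V), (B3 \o B)%VF - (B \o B3)%VF = 0 -> preserves B E.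
  move=> B hc; apply: presP => x; rewrite !EP => /eqP Hx.
  by rewrite (commE _ _ _ _ _ hc) Hx linearZ.
case: (eqVneq E fullv) => hE.
  exists U; split => //; split => //.
  apply: presP => x Hx.
  have : x \in E by rewrite hE memvf.
  by rewrite EP => /eqP ->; rewrite memvZ.
exists E; split => //.
- split; [exact: pE | exact: pE |].
  by apply: presP => x Hx; move: (Hx); rewrite EP => /eqP ->; rewrite memvZ.
- by rewrite hI0 sub0v.
Qed.
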